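(* Let $T$ be an HST with parameter $2$ and depth $h$, let $R$ be a set of requests issued at leaves of $T$, and consider a synchronous execution of the Arrow protocol on $T$ with request set $R$. Let $n(\ell)$ be the number of level-$\ell$ blocks of the corresponding hierarchical block partition. Then the total cost of the execution equals $\sum_{\ell=0}^{h-1}\big(n(\ell)-n(\ell+1)\big)\cdot\delta(\ell+1)$, where $\delta(\ell)=2^{\ell+1}-2$.
   Context: HST with parameter $2$, depth $h$: rooted tree, all leaves at the same depth, leaves on level $0$, root on level $h$, each edge from a level-$\ell$ node to a child has length $2^{\ell-1}$; two leaves whose lowest common ancestor is on level $\ell$ are at distance $\delta(\ell)=2^{\ell+1}-2$. A level-$\ell$ subtree is the subtree rooted at a level-$\ell$ node. Arrow protocol: each node $u$ has a pointer $\mathrm{link}(u)$ (itself or a neighbour), initially all pointing towards the node $v_0$ of a dummy request $r_0=(v_0,0)$, with $\mathrm{link}(v_0)=v_0$. A request $r=(v,t)$ issued at $v$ at time $t$: if $\mathrm{link}(v)=v$ it is queued behind the previous request at $v$; else atomically $\mathrm{find}(r)$ is sent to $\mathrm{link}(v)$ and $\mathrm{link}(v):=v$. A node $u$ receiving $\mathrm{find}(r)$ from $w$: if $\mathrm{link}(u)=u$, atomically $r$ is queued behind the last request issued at $u$ and $\mathrm{link}(u):=w$; else atomically forwards to $\mathrm{link}(u)$ and sets $\mathrm{link}(u):=w$. In a synchronous execution each message over an edge takes exactly the edge length. The resulting order is $r_0,r_1,\dots,r_{|R|-1}$ ($r_i=(v_i,t_i)$); the latency of $r_i$ ($i\ge1$)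 is the arrival time of $\mathrm{find}(r_i)$ at $v_{i-1}$ minus $t_i$, and the total cost is the sum of the latencies. Hierarchical block partition: for each level $\ell\in[0,h]$, the index set $\{0,\dots,|R|-1\}$ is partitioned into blocks $b^\ell_0,\dots,b^\ell_{n(\ell)-1}$, which are the maximal sets of consecutive indices (in the Arrow order) whose requests all lie in the same level-$\ell$ subtree of $T$, numbered in increasing order of indices. *)

(* Defs.v *)
From mathcomp Require Import all_boot all_order all_algebra.
Set Implicit Arguments. Unset Strict Implicit. Unset Printing Implicit Defensive.
Import Order.TTheory GRing.Theory Num.Theory.
Local Open Scope ring_scope.

(* lvl the level. The edge between a non-root node u and par u (a level      *)
(* lvl u + 1 node) has length 2^(lvl u), i.e. 2^(l-1) for a parent on level  *)
(* l. All leaves are on level 0: every node on a positive level has a child. *)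
Definition is_HST2 (V : finType) (root : V) (par : V -> V) (lvl : V -> nat)
  (h : nat) : Prop :=
  [/\ lvl root = h, par root = root,
      (forall v, v != root -> lvl (par v) = (lvl v).+1)
    & (forall v, (0 < lvl v)%N -> exists c, c != root /\ par c = v)].

Definition anc (V : finType) (par : V -> V) (u x : V) : Prop :=
  exists k, iter k par x = u.

Definition elen (R : realFieldType) (V : finType) (lvl : V -> nat) (u w : V) : R :=
  (2 ^ (minn (lvl u) (lvl w)))%:R.

Definition delta (l : nat) : nat := (2 ^ l.+1 - 2)%N.

(* Initial pointers: every node points to its neighbour on the path to v0;  *)
Definition points_toward (V : finType) (root : V) (par : V -> V) (v0 : V)
  (link0 : V -> V) : Prop :=
  link0 v0 = v0 /\
  forall u, u != v0 ->
    (anc par u v0 -> [/\ link0 u != root, par (link0 u) = u & anc par (link0 u) v0]) /\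
    (~ anc par u v0 -> link0 u = par u).

Definition upd (T : eqType) (U : Type) (f : T -> U) (a : T) (b : U) : T -> U :=
  fun x => if x == a then b else f x.

Section Arrow.
Variables (R : realFieldType) (V : finType) (N : nat).
Variables (lvl : V -> nat) (node : 'I_N.+1 -> V) (time : 'I_N.+1 -> R).

(* Requests are indexed by 'I_N.+1; index 0 is the dummy request r0.          *)
(* A message find(r) in flight: (request, sender, receiver, arrival time).   *)
Definition msg := ('I_N.+1 * V * V * R)%type.

Record config := Config {
  link : V -> V;
  lastreq : V -> 'I_N.+1;
  issued : 'I_N.+1 -> bool;
  msgs : seq msg;
  qpred : 'I_N.+1 -> option 'I_N.+1;
  qtime : 'I_N.+1 -> R
}.

Definition init_config (link0 : V -> V) : config :=
  Config link0 (fun _ => ord0) (fun i => i == ord0) [::]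
         (fun _ => None) (fun _ => 0).

(* t is the earliest pending event time (synchronous execution) *)
Definition earliest (c : config) (t : R) : Prop :=
  (forall j, ~~ issued c j -> t <= time j) /\ all (fun m : msg => t <= m.2) (msgs c).

Inductive step : config -> config -> Prop :=
| IssueLocal c i :
    ~~ issued c i -> earliest c (time i) -> link c (node i) = node i ->
    step c (Config (link c) (upd (lastreq c) (node i) i) (upd (issued c) i true)
                   (msgs c) (upd (qpred c) i (Some (lastreq c (node i))))
                   (upd (qtime c) i (time i)))
| IssueSend c i :
    ~~ issued c i -> earliest c (time i) -> link c (node i) != node i ->
    step c (Config (upd (link c) (node i) (node i)) (upd (lastreq c) (node i) i)
                   (upd (issued c) i true)
                   (rcons (msgs c) (i, node i, link c (node i),
                          time i + elen R lvl (node i) (link c (node i))))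
                   (qpred c) (qtime c))
| DeliverQueue c m1 m2 i w u t :
    msgs c = m1 ++ (i, w, u, t) :: m2 -> earliest c t -> link c u = u ->
    step c (Config (upd (link c) u w) (lastreq c) (issued c) (m1 ++ m2)
                   (upd (qpred c) i (Some (lastreq c u))) (upd (qtime c) i t))
| DeliverForward c m1 m2 i w u t :
    msgs c = m1 ++ (i, w, u, t) :: m2 -> earliest c t -> link c u != u ->
    step c (Config (upd (link c) u w) (lastreq c) (issued c)
                   (rcons (m1 ++ m2) (i, u, link c u, t + elen R lvl u (link c u)))
                   (qpred c) (qtime c)).

Inductive reach : config -> config -> Prop :=
| reach_refl c : reach c c
| reach_step c1 c2 c3 : step c1 c2 -> reach c2 c3 -> reach c1 c3.

Definition final (c : config) : Prop :=
  (forall i, issued c i) /\ msgs c = [::].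

Definition arrow_order (c : config) (s : seq 'I_N.+1) : Prop :=
  [/\ size s = N.+1, uniq s, nth ord0 s 0 = ord0
    & forall k, (k < N)%N -> qpred c (nth ord0 s k.+1) = Some (nth ord0 s k)].

Definition total_cost (c : config) : R :=
  \sum_(i < N.+1 | i != ord0) (qtime c i - time i).

End Arrow.

(* level-l subtree containing the (leaf) node of request i, identified by *)
(* its root, the level-l ancestor *)
Definition subtree_key (V : finType) (N : nat) (par : V -> V) (node : 'I_N.+1 -> V)
  (l : nat) (i : 'I_N.+1) : V := iter l par (node i).

(* n(l): number of level-l blocks = number of positions starting a maximal run *)
Definition nblocks (V : finType) (N : nat) (par : V -> V) (node : 'I_N.+1 -> V)
  (s : seq 'I_N.+1) (l : nat) : nat :=
  #|[set k : 'I_(size s) | ((k : nat) == 0%N) ||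
       (subtree_key par node l (nth ord0 s k) != subtree_key par node l (nth ord0 s k.-1))]|.

(* Main.v *)
Require Import Defs.
From mathcomp Require Import all_boot all_order all_algebra.
From mathcomp Require Import zify ring lra.
Import Order.TTheory GRing.Theory Num.Theory.
Set Implicit Arguments. Unset Strict Implicit.

Section Tree.
Variables (V : finType) (root : V) (par : V -> V) (lvl : V -> nat) (h : nat).
Hypothesis HT : is_HST2 root par lvl h.

Lemma lvl_root : lvl root = h. Proof. by case: HT. Qed.
Lemma par_root : par root = root. Proof. by case: HT. Qed.
Lemma lvl_par v : v != root -> lvl (par v) = (lvl v).+1.
Proof. by case: HT => _ _ H _; apply: H. Qed.
Lemma par_neq v : v != root -> par v != v.
Proof. move=> /lvl_par H; apply/eqP => E; rewrite E in H; lia. Qed.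

Lemma iter_root k : iter k par root = root.
Proof. elim: k => //= k ->; exact: par_root. Qed.

Lemma lvl_iter_gen v k : (forall j, j < k -> iter j par v != root) ->
  lvl (iter k par v) = lvl v + k.
Proof.
elim: k => [|k IH] H /=; first by rewrite addn0.
rewrite lvl_par ?IH ?addnS //; first by move=> j Hj; apply: H; lia.
by apply: H.
Qed.

Lemma reach_exists v : exists j, iter j par v == root.
Proof.
set M := \max_(u : V) lvl u.
case: (boolP [exists j : 'I_(M.+2), iter j par v == root]).
  by move/existsP => [j Hj]; exists j.
move=> /existsPn H; exfalso.
have := @lvl_iter_gen v M.+1.
have Hb : lvl (iter M.+1 par v) <= M by exact: (@leq_bigmax _ lvl (iter M.+1 par v)).
move=> H2; rewrite H2 in Hb; first lia.
move=> j Hj; have Hj' : j < M.+2 by lia.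
exact: (H (Ordinal Hj')).
Qed.

Lemma first_root v : lvl v <= h /\ iter (h - lvl v) par v = root /\
  (forall j, j < h - lvl v -> iter j par v != root).
Proof.
have [j Hj Hmin] := ex_minnP (reach_exists v).
have Hb : forall i, i < j -> iter i par v != root.
  move=> i Hi; apply/negP => /eqP E.
  have := Hmin i; rewrite E eqxx => /(_ isT); lia.
have := lvl_iter_gen Hb; rewrite (eqP Hj) lvl_root => E.
have -> : h - lvl v = j by lia.
split; first lia. by split; [apply/eqP|].
Qed.

Lemma lvl_le v : lvl v <= h. Proof. by case: (first_root v). Qed.
Lemma iter_h v : iter (h - lvl v) par v = root. Proof. by case: (first_root v) => _ []. Qed.
Lemma lvl_iter v k : k <= h - lvl v -> lvl (iter k par v) = lvl v + k.
Proof.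
move=> Hk; apply: lvl_iter_gen => j Hj.
case: (first_root v) => _ [_ H]; apply: H; lia.
Qed.
Lemma lvl_lt v : v != root -> lvl v < h.
Proof. move=> Hv; have := lvl_le (par v); rewrite lvl_par //. Qed.

Lemma iter_big v k : h - lvl v <= k -> iter k par v = root.
Proof.
move=> Hk; have -> : k = (k - (h - lvl v)) + (h - lvl v) by lia.
by rewrite iterD iter_h iter_root.
Qed.

(* ancestor test for leaves *)
Definition A (y u : V) : bool := iter (lvl u) par y == u.

Section Leaf.
Variable y : V.
Hypothesis Hy : lvl y = 0.

Lemma A_root : A y root.
Proof. by rewrite /A lvl_root; have := iter_h y; rewrite Hy subn0 => ->. Qed.
Lemma A_self : A y y. Proof. by rewrite /A Hy. Qed.
Lemma A_par u : A y u -> u != root -> A y (par u).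
Proof. by rewrite /A => /eqP E Hu; rewrite lvl_par //= E. Qed.
Lemma A_uniq c c' : c != root -> c' != root -> par c = par c' -> A y c -> A y c' -> c = c'.
Proof.
move=> Hc Hc' E /eqP <- /eqP <-.
have : lvl (par c) = lvl (par c') by rewrite E.
by rewrite !lvl_par // => [[->]].
Qed.
Lemma anc_A u : anc par u y -> A y u.
Proof.
case=> k <-; rewrite /A.
case: (leqP k h) => Hk.
  by rewrite lvl_iter ?Hy //; lia.
by rewrite !iter_big ?lvl_root ?Hy //; lia.
Qed.
Lemma A_anc u : A y u -> anc par u y.
Proof. by move=> /eqP E; exists (lvl u). Qed.

Lemma leaf_nochild c : c != root -> par c <> y.
Proof. by move=> Hc E; have := lvl_par Hc; rewrite E Hy. Qed.
End Leaf.

Fixpoint Dn (n : nat) (y u : V) : nat :=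
  match n with
  | 0 => 2 ^ lvl u - 1
  | n'.+1 => if A y u then 2 ^ lvl u - 1 else 2 ^ lvl u + Dn n' y (par u)
  end.
Definition D y u := Dn (h - lvl u) y u.

Lemma D_eq y u : lvl y = 0 ->
  D y u = if A y u then 2 ^ lvl u - 1 else 2 ^ lvl u + D y (par u).
Proof.
move=> Hy; rewrite /D.
case: (eqVneq u root) => [->|Hu].
  by rewrite A_root // lvl_root subnn /= lvl_root.
have := lvl_lt Hu; have := lvl_par Hu => E Hl.
have -> : h - lvl u = (h - lvl (par u)).+1 by rewrite E; lia.
by [].
Qed.

Definition nb (a b : V) : bool :=
  ((a != root) && (par a == b)) || ((b != root) && (par b == a)).
Definition enat (a b : V) : nat := 2 ^ minn (lvl a) (lvl b).

Lemma nbC a b : nb a b = nb b a.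
Proof. by rewrite /nb orbC. Qed.
Lemma nb_neq a b : nb a b -> a != b.
Proof.
rewrite /nb => /orP [/andP [Ha /eqP <-]|/andP [Hb /eqP <-]].
  by rewrite eq_sym par_neq.
by rewrite par_neq.
Qed.

Lemma D_self y : lvl y = 0 -> D y y = 0.
Proof. by move=> Hy; rewrite D_eq // A_self // Hy. Qed.

Lemma enat_par a : a != root -> enat a (par a) = 2 ^ lvl a.
Proof. by move=> Ha; rewrite /enat lvl_par // minnE; congr (2 ^ _); lia. Qed.
Lemma enat_parC a : a != root -> enat (par a) a = 2 ^ lvl a.
Proof. by move=> Ha; rewrite /enat lvl_par // minnE; congr (2 ^ _); lia. Qed.

Lemma D_leaf_nb y x : lvl y = 0 -> nb y x -> D y x = enat y x.
Proof.
move=> Hy; rewrite /nb => /orP [/andP [Hr /eqP <-]|/andP [Hx /eqP E]].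
  by rewrite D_eq // A_par ?A_self // lvl_par // enat_par // Hy.
by exfalso; apply: (leaf_nochild Hy Hx E).
Qed.

Lemma NL y u w x : lvl y = 0 -> nb u w -> nb u x ->
  D y w + enat w u = D y u -> x != w -> D y x = D y u + enat u x.
Proof.
move=> Hy Hw Hx Hd Hxw.
have pos : forall k, 0 < 2 ^ k by move=> k; rewrite expn_gt0.
case: (boolP (A y u)) => Au.
  have Du : D y u = 2 ^ lvl u - 1 by rewrite D_eq // Au.
  have Hw' : (w != root) && (par w == u) && A y w.
    move: Hw; rewrite /nb => /orP [/andP [Hu /eqP Ew]|/andP [Hwr /eqP Ew]].
      exfalso; move: Hd; rewrite Du D_eq // -Ew A_par // lvl_par // enat_parC //.
      have := pos (lvl u); lia.
    rewrite Hwr Ew eqxx /=; apply/negPn/negP => Aw.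
    move: Hd; rewrite Du D_eq // (negbTE Aw) -Ew enat_par // Ew Du.
    have := pos (lvl w); lia.
  case/andP: Hw' => /andP [Hwr /eqP Ew] Aw.
  move: Hx; rewrite /nb => /orP [/andP [Hu /eqP <-]|/andP [Hxr /eqP Ex]].
    rewrite D_eq // A_par // lvl_par // Du enat_par // expnS.
    have := pos (lvl u); lia.
  have Ax : A y x = false.
    apply/negP => Ax; move/eqP: Hxw; apply; apply: (@A_uniq y) => //; by rewrite Ex Ew.
  by rewrite D_eq // Ax -Ex enat_parC // addnC.
have Hu : u != root by apply: contraNneq Au => ->; apply: A_root.
have Du : D y u = 2 ^ lvl u + D y (par u) by rewrite D_eq // (negbTE Au).
have Ew : w = par u.
  move: Hw; rewrite /nb => /orP [/andP [_ /eqP Ew]|/andP [Hwr /eqP Ew]] //.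
  exfalso; have Aw : A y w = false.
    by apply/negP => Aw; move: Au; rewrite -Ew A_par.
  move: Hd; rewrite D_eq // Aw Ew; have := pos (lvl w); lia.
move: Hx; rewrite /nb => /orP [/andP [_ /eqP Ex]|/andP [Hxr /eqP Ex]].
  by move: Hxw; rewrite Ew Ex eqxx.
have Ax : A y x = false by apply/negP => Ax; move: Au; rewrite -Ex A_par.
by rewrite D_eq // Ax -Ex enat_parC // addnC.
Qed.

End Tree.

Section Proto.
Variables (R : realFieldType) (V : finType) (root : V) (par : V -> V)
  (lvl : V -> nat) (h N : nat) (node : 'I_N.+1 -> V) (time : 'I_N.+1 -> R)
  (link0 : V -> V).
Hypotheses (HT : is_HST2 root par lvl h) (Hleaf : forall i, lvl (node i) = 0)
  (Hpt : points_toward root par (node ord0) link0).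

Local Notation DD := (D par lvl h).
Local Notation NB := (nb root par).

Definition cnt (c : config R V N) (a b : V) : nat :=
  (link c a == b) + count (fun m : msg R V N => (m.1.1.2 == a) && (m.1.2 == b)) (msgs c).

Definition Inv (c : config R V N) : Prop :=
  [/\ forall u, (link c u == u) || NB u (link c u),
      forall a b, NB a b -> cnt c a b + cnt c b a = 1,
      forall i w u t, (i, w, u, t) \in msgs c ->
        [/\ NB w u, DD (node i) w + enat lvl w u = DD (node i) u
          & t = (time i + (DD (node i) u)%:R)%R],
      forall u, link c u = u -> node (lastreq c u) = u
    & forall i j, qpred c i = Some j -> qtime c i = (time i + (DD (node i) (node j))%:R)%R].

Lemma upd_same (T : eqType) U (f : T -> U) a b : upd f a b a = b.
Proof. by rewrite /upd eqxx. Qed.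
Lemma upd_other (T : eqType) U (f : T -> U) a b x : x != a -> upd f a b x = f x.
Proof. by rewrite /upd => /negbTE ->. Qed.

Lemma step_inv c c' : step lvl node time c c' -> Inv c -> Inv c'.
Proof.
case=> {c c'}.
-
  move=> c i _ _ Hl [I1 I2 I3 I4 I5]; split => //=.
  + move=> u Hu; case: (eqVneq u (node i)) => [->|Hne].
      by rewrite upd_same.
    by rewrite upd_other // I4.
  + move=> j k; case: (eqVneq j i) => [->|Hne].
      rewrite !upd_same => [[<-]]; rewrite I4 // (D_self HT) // addr0 //.
    by rewrite !upd_other //; apply: I5.
-
  move=> c i _ _ Hl [I1 I2 I3 I4 I5].
  set v := node i; set x := link c v.
  have Hnb : NB v x by have := I1 v; rewrite (negbTE Hl).
  split => /=.
  + move=> u; case: (eqVneq u v) => [->|Hne]; first by rewrite upd_same eqxx.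
    by rewrite upd_other.
  + move=> a b Hab; have := I2 a b Hab; rewrite /cnt /= -cats1 !count_cat /= /upd.
    have Hab' := nb_neq HT Hab.
    case: (eqVneq a v) => [Ea|Ha]; case: (eqVneq b v) => [Eb|Hb].
    * by move: Hab'; rewrite Ea Eb eqxx.
    * subst a; rewrite /x /=; lia.
    * subst b; rewrite /x (eq_sym v a) (negbTE Ha) /=; lia.
    * rewrite /=; lia.
  + move=> j w u t; rewrite mem_rcons in_cons => /orP [/eqP [-> -> -> ->]|Hm].
      rewrite /v (D_self HT) ?Hleaf // (D_leaf_nb HT) ?Hleaf // add0n; split => //.
    exact: I3.
  + move=> u; case: (eqVneq u v) => [->|Hne]; first by rewrite !upd_same.
    by rewrite !upd_other //; apply: I4.
  + exact: I5.
-
  move=> c m1 m2 i w u t Hm _ Hl [I1 I2 I3 I4 I5].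
  have [Hwu Hd Ht] : [/\ NB w u, DD (node i) w + enat lvl w u = DD (node i) u
          & t = (time i + (DD (node i) u)%:R)%R].
    by apply: I3; rewrite Hm mem_cat in_cons eqxx orbT.
  have Hwu' := nb_neq HT Hwu.
  split => /=.
  + move=> a; case: (eqVneq a u) => [->|Hne]; first by rewrite upd_same nbC Hwu orbT.
    by rewrite upd_other.
  + move=> a b Hab; have := I2 a b Hab; rewrite /cnt /= Hm !count_cat /= /upd.
    have Hab' := nb_neq HT Hab.
    case: (eqVneq a u) => [Ea|Ha]; case: (eqVneq b u) => [Eb|Hb].
    * by move: Hab'; rewrite Ea Eb eqxx.
    * subst a; rewrite Hl (eq_sym u b) (negbTE Hb) (negbTE Hwu') /=. lia.
    * subst b; rewrite Hl (eq_sym u a) (negbTE Ha) ?andbT ?andbF /=. lia.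
    * rewrite ?andbT ?andbF /=. lia.
  + move=> j w' u' t' Hin; apply: I3; move: Hin.
    by rewrite Hm !mem_cat in_cons => /orP [->|->]; rewrite ?orbT.
  + move=> a; case: (eqVneq a u) => [->|Hne].
      by rewrite upd_same => E; move: Hwu'; rewrite E eqxx.
    by rewrite upd_other //; apply: I4.
  + move=> j k; case: (eqVneq j i) => [->|Hne].
      by rewrite !upd_same => [[<-]]; rewrite I4.
    by rewrite !upd_other //; apply: I5.
-
  move=> c m1 m2 i w u t Hm _ Hl [I1 I2 I3 I4 I5].
  set x := link c u.
  have [Hwu Hd Ht] : [/\ NB w u, DD (node i) w + enat lvl w u = DD (node i) u
          & t = (time i + (DD (node i) u)%:R)%R].
    by apply: I3; rewrite Hm mem_cat in_cons eqxx orbT.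
  have Hwu' := nb_neq HT Hwu.
  have Hux : NB u x by have := I1 u; rewrite (negbTE Hl).
  have Hxw : x != w.
    apply/eqP => E; have := I2 w u Hwu; rewrite /cnt Hm count_cat /= -/x E !eqxx /=.
    lia.
  split => /=.
  + move=> a; case: (eqVneq a u) => [->|Hne]; first by rewrite upd_same nbC Hwu orbT.
    by rewrite upd_other.
  + move=> a b Hab; have := I2 a b Hab; rewrite /cnt /= Hm -cats1 !count_cat /= /upd.
    have Hab' := nb_neq HT Hab.
    case: (eqVneq a u) => [Ea|Ha]; case: (eqVneq b u) => [Eb|Hb].
    * by move: Hab'; rewrite Ea Eb eqxx.
    * subst a; rewrite /x ?andbT ?andbF /=. lia.
    * subst b; rewrite /x ?andbT ?andbF /=. lia.
    * rewrite ?andbT ?andbF /=. lia.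
  + move=> j w' u' t'; rewrite mem_rcons in_cons => /orP [/eqP [-> -> -> ->]|Hin].
      have Hwu2 : NB u w by rewrite nbC.
      have E := NL HT (Hleaf i) Hwu2 Hux Hd Hxw.
      split => //.
      by rewrite Ht E natrD addrA.
    apply: I3; move: Hin.
    by rewrite Hm !mem_cat in_cons => /orP [->|->]; rewrite ?orbT.
  + move=> a; case: (eqVneq a u) => [->|Hne].
      by rewrite upd_same => E; move: Hwu'; rewrite E eqxx.
    by rewrite upd_other //; apply: I4.
  + exact: I5.
Qed.

Local Notation v0 := (node ord0).
Local Notation AA := (A par lvl).

Lemma link0_v0 : link0 v0 = v0. Proof. by case: Hpt. Qed.

Lemma link0_A u : u != v0 -> AA v0 u ->
  [/\ link0 u != root, par (link0 u) = u & AA v0 (link0 u)].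
Proof.
move=> Hu Au; case: Hpt => _ /(_ u Hu) [/(_ (A_anc Au)) [H1 H2 H3] _].
by split => //; apply: (anc_A HT (Hleaf ord0)).
Qed.

Lemma link0_nA u : ~~ AA v0 u -> link0 u = par u.
Proof.
move=> Au; have Hu : u != v0.
  by apply: contraNneq Au => ->; apply: A_self.
case: Hpt => _ /(_ u Hu) [_ H]; apply: H => /(anc_A HT (Hleaf ord0)) H'.
by rewrite H' in Au.
Qed.

Lemma root_not_v0_or : AA v0 root.
Proof. exact: (A_root HT (Hleaf ord0)). Qed.

Lemma I1_init u : (link0 u == u) || NB u (link0 u).
Proof.
case: (eqVneq u v0) => [->|Hu]; first by rewrite link0_v0 eqxx.
case: (boolP (AA v0 u)) => Au.
  by have [H1 H2 _] := link0_A Hu Au; rewrite /nb H1 H2 eqxx /= !orbT.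
rewrite link0_nA // /nb eqxx andbT.
have -> : u != root by apply: contraNneq Au => ->; apply: root_not_v0_or.
by rewrite orbT.
Qed.

Lemma lvl_v0 : lvl v0 = 0. Proof. exact: Hleaf. Qed.

Lemma L0 a : a != root -> (link0 a == par a) + (link0 (par a) == a) = 1.
Proof.
move=> Ha.
have Hpa : par a != v0.
  apply/eqP => E; have := lvl_par HT Ha; rewrite E lvl_v0; lia.
have pp : forall b, b != root -> par (par b) != b.
  move=> b Hb; case: (eqVneq (par b) root) => [E|Hpb].
    by rewrite E (par_root HT) -E (par_neq HT Hb).
  apply/eqP => E; have := lvl_par HT Hpb; rewrite E (lvl_par HT Hb); lia.
case: (boolP (AA v0 a)) => Aa.
  have Apa : AA v0 (par a) by apply: (A_par HT).
  have [H1 H2 H3] := link0_A Hpa Apa.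
  have -> : link0 (par a) = a by apply: (A_uniq HT H1 Ha _ H3 Aa); rewrite H2.
  rewrite eqxx addn1; case: (eqVneq a v0) => [Ea|Hav].
    by rewrite {1}Ea link0_v0 -Ea eq_sym (negbTE (par_neq HT Ha)).
  have [K1 K2 K3] := link0_A Hav Aa.
  case: (eqVneq (link0 a) (par a)) => // E.
  by move: (pp a Ha); rewrite -{1}E K2 eqxx.
rewrite link0_nA // eqxx add1n; congr (_.+1).
apply/eqP; rewrite eqb0; apply/eqP => E.
case: (boolP (AA v0 (par a))) => Apa.
  have [H1 H2 H3] := link0_A Hpa Apa.
  by move: Aa; rewrite -E H3.
move: (pp a Ha); rewrite -link0_nA // E eqxx //.
Qed.

Lemma link0_self u : link0 u = u -> u = v0.
Proof.
move=> E; case: (eqVneq u v0) => // Hu; exfalso.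
case: (boolP (AA v0 u)) => Au.
  have [H1 H2 _] := link0_A Hu Au.
  by move: H1; rewrite E => Hr; move: (par_neq HT Hr); rewrite -{1}E H2 eqxx.
move: (link0_nA Au); rewrite E => Epu.
case: (eqVneq u root) => [Er|Hr].
  by move: Au; rewrite Er root_not_v0_or.
by move: (par_neq HT Hr); rewrite -Epu eqxx.
Qed.

Lemma Inv_init : Inv (init_config R N link0).
Proof.
split => /=.
- exact: I1_init.
- move=> a b; rewrite /cnt /= !addn0 /nb => /orP [/andP [Ha /eqP <-]|/andP [Hb /eqP <-]].
    exact: L0.
  by rewrite addnC; apply: L0.
- by [].
- by move=> u /link0_self ->.
- by [].
Qed.

Lemma reach_inv c c' : reach lvl node time c c' -> Inv c -> Inv c'.
Proof.
elim=> // c1 c2 c3 Hs _ IH H; apply: IH; exact: step_inv Hs H.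
Qed.

Lemma cost_eq c s : Inv c -> arrow_order c s ->
  total_cost time c =
  (\sum_(k < N) (DD (node (nth ord0 s k.+1)) (node (nth ord0 s k)))%:R)%R.
Proof.
move=> [_ _ _ _ I5] [Hsz Hu H0 Hq].
have Hperm : perm_eq (enum 'I_N.+1) s.
  apply: uniq_perm; [exact: enum_uniq | exact: Hu |].
  have Hsub : {subset s <= enum 'I_N.+1} by move=> x _; rewrite mem_enum.
  have Hle : size (enum 'I_N.+1) <= size s by rewrite size_enum_ord Hsz.
  have [_ E] := uniq_min_size Hu Hsub Hle.
  by move=> x; rewrite E.
have P1 : perm_eq (index_enum 'I_N.+1) (enum 'I_N.+1).
  apply: uniq_perm; [exact: index_enum_uniq | exact: enum_uniq |].
  by move=> x; rewrite mem_index_enum mem_enum.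
have {P1}Hperm := perm_trans P1 Hperm.
case: s Hsz Hu H0 Hq Hperm => [//|a s'] /= [Hsz] /andP [Ha Hu'] Ea Hq Hperm.
subst a.
rewrite /total_cost (perm_big _ Hperm) big_cons eqxx /=.
rewrite big_seq_cond (eq_bigl (fun i => i \in s')); last first.
  move=> i /=; case: (boolP (i \in s')) => //= Hi.
  by apply/eqP => E; move: Ha; rewrite -E Hi.
rewrite -big_seq (big_nth ord0) Hsz big_mkord.
apply: eq_bigr => k _.
have := Hq k (ltn_ord k) => /= Hk.
by rewrite (I5 _ _ Hk) addrAC subrr add0r.
Qed.

End Proto.

Section Comb.
Variables (V : finType) (root : V) (par : V -> V) (lvl : V -> nat) (h : nat).
Hypothesis HT : is_HST2 root par lvl h.

Lemma Dg y z : lvl y = 0 -> lvl z = 0 -> forall k m, m + k = h ->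
  D par lvl h y (iter m par z) =
  \sum_(m <= l < h) ((iter l par y != iter l par z) * 2 ^ l.+1) + (2 ^ m - 1).
Proof.
move=> Hy Hz; elim=> [|k IH] m Hmk.
  rewrite addn0 in Hmk; subst m.
  have Er : iter h par z = root by have := iter_h HT z; rewrite Hz subn0.
  by rewrite Er (D_eq HT _ Hy) (A_root HT Hy) (lvl_root HT) big_geq ?leqnn ?add0n.
have Hlu : lvl (iter m par z) = m by rewrite (lvl_iter HT) ?Hz //; lia.
rewrite (D_eq HT _ Hy) /A Hlu.
case: (boolP (iter m par y == iter m par z)) => E.
  rewrite big_nat_cond big1 ?add0n // => l /andP [/andP [Hml _] _].
  by rewrite -(subnK Hml) !iterD (eqP E) eqxx.
have T1 : m.+1 + k = h by lia.
have T3 : m < h by lia.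
have -> : par (iter m par z) = iter m.+1 par z by [].
rewrite (IH m.+1 T1) (big_ltn T3) E !expnS; have := expn_gt0 2 m.
lia.
Qed.
Lemma D_sum y z : lvl y = 0 -> lvl z = 0 ->
  D par lvl h y z = \sum_(l < h) ((iter l par y != iter l par z) * 2 ^ l.+1).
Proof.
move=> Hy Hz; have := Dg Hy Hz (k := h) (m := 0) (add0n h).
by rewrite /= expn0 subnn addn0 big_mkord.
Qed.

End Comb.

Lemma nblocks_eq (V : finType) (N : nat) (par : V -> V) (node : 'I_N.+1 -> V)
  (s : seq 'I_N.+1) l : size s = N.+1 ->
  nblocks par node s l = 1 + \sum_(k < N)
    (subtree_key par node l (nth ord0 s k.+1) != subtree_key par node l (nth ord0 s k)).
Proof.
move=> Hs; rewrite /nblocks -sum1_card big_mkcond /=.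
pose F := fun k : nat => nat_of_bool ((k == 0) ||
       (subtree_key par node l (nth ord0 s k) != subtree_key par node l (nth ord0 s k.-1))).
transitivity (\sum_(k < size s) F k).
  by apply: eq_bigr => k _; rewrite inE /F; case: (_ || _).
rewrite -(big_mkord xpredT F) Hs big_nat_recl // big_mkord.
by [].
Qed.

Section Alg.
Local Open Scope ring_scope.
Lemma alg (R : comPzRingType) (c : nat -> nat) H :
  \sum_(l < H) ((((1 + c l)%:R : R) - (1 + c l.+1)%:R) * (delta l.+1)%:R) =
  (\sum_(l < H) c l * 2 ^ l.+1)%N%:R - (c H)%:R * (delta H)%:R.
Proof.
elim: H => [|H IH].
  by rewrite !big_ord0 /delta subnn mulr0 subr0.
have Ed : (delta H.+1 = delta H + 2 ^ H.+1)%N.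
  rewrite /delta !expnS; have := expn_gt0 2 H; lia.
rewrite big_ord_recr IH /= big_ord_recr /= Ed !natrD !natrM.
ring.
Qed.
End Alg.

Local Open Scope ring_scope.

Theorem lemma6 (R : realFieldType) (V : finType) (root : V) (par : V -> V)
  (lvl : V -> nat) (h N : nat) (node : 'I_N.+1 -> V) (time : 'I_N.+1 -> R)
  (link0 : V -> V) (c : config R V N) (s : seq 'I_N.+1) :
  is_HST2 root par lvl h ->
  (forall i, lvl (node i) = 0%N) ->
  time ord0 = 0 ->
  (forall i, 0 <= time i) ->
  (forall i j, node i = node j -> time i = time j -> i = j) ->
  points_toward root par (node ord0) link0 ->
  reach lvl node time (init_config R N link0) c ->
  final c ->
  arrow_order c s ->
  total_cost time c =
    \sum_(l < h) (((nblocks par node s l)%:R - (nblocks par node s l.+1)%:R)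
                  * (delta l.+1)%:R).
Proof.
move=> HT Hleaf H0 Hpos Huniq Hpt Hreach Hfin Hord.
have I := reach_inv HT Hleaf Hreach (Inv_init time HT Hleaf Hpt).
rewrite (cost_eq I Hord).
case: Hord => Hsz _ _ _.
pose cc := fun l => (\sum_(k < N) (subtree_key par node l (nth ord0 s k.+1)
                    != subtree_key par node l (nth ord0 s k)))%N.
have En : forall l, nblocks par node s l = (1 + cc l)%N by move=> l; rewrite nblocks_eq.
symmetry; under eq_bigr do rewrite !En.
rewrite alg.
have Ch : cc h = 0%N.
  rewrite /cc big1 // => k _.
  have Er : forall i, iter h par (node i) = root.
    by move=> i; have := iter_h HT (node i); rewrite Hleaf subn0.
  by rewrite /subtree_key !Er eqxx.
rewrite Ch mul0r subr0 -natr_sum; congr (_%:R).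
under eq_bigr do rewrite (D_sum HT (Hleaf _) (Hleaf _)).
rewrite exchange_big /=; apply: eq_bigr => l _.
by rewrite /cc big_distrl.
Qed.
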